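(* For any two subsets $I,J\subseteq\{1,\dots,n\}$, $F_I=F_J$ if and only if $\overline I^0=\overline J^0$ (equivalently $\Pi_{\overline I^0}=\Pi_{\overline J^0}$).
   Context: Let $\mathfrak g$ be a finite-dimensional complex simple Lie algebra with root system $\Phi$, base $\Pi=\{\alpha_1,\dots,\alpha_n\}$, Weyl group $W$; $E$ is the real span of $\Pi$ with $W$-invariant inner product $(\cdot,\cdot)$. Fix a dominant integral weight $\lambda=\sum_i m_i\alpha_i$. For $x\in E$, $c_i(x)$ is the coefficient of $\alpha_i$ in $x$. Weight polytope $\mathbf P=\mathrm{conv}(W\lambda)$, and $F_I=\{x\in\mathbf P\mid c_i(x)=m_i\ \forall i\in I\}$ for $I\subseteq\{1,\dots,n\}$. The extended Dynkin diagram is the Dynkin diagram of $\Pi$ plus a node $\{-\lambda\}$ joined to $\alpha_i$ iff $(\lambda,\alpha_i)>0$. For $I\subseteq\{1,\dots,n\}$ with complement $\overline I$, $\overline I^0$ is the set of indices $j$ such that $\alpha_j$ lies in the connected component containing $\{-\lambda\}$ of the induced subdiagram on $\{\alpha_j\mid j\in\overline I\}\cup\{-\lambda\}$; $\Pi_{\overline I^0}=\{\alpha_j\mid j\in\overline I^0\}$. *)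

(* Defs.v *)
From HB Require Import structures.
From mathcomp Require Import all_boot all_order all_algebra.
From mathcomp Require Import reals.
Set Implicit Arguments. Unset Strict Implicit. Unset Printing Implicit Defensive.
Import Order.TTheory GRing.Theory Num.Theory.
Local Open Scope ring_scope.

Section RootData.
Variables (R : realType) (n : nat).
Local Notation vec := 'rV[R]_n.

Definition dot (u v : vec) : R := \sum_(i < n) u 0 i * v 0 i.

Definition refl (a v : vec) : vec := v - ((2 * dot v a) / dot a a) *: a.

Definition root_system (Phi : seq vec) : Prop :=
  [/\ (0 : vec) \notin Phi,
      (<<Phi>>%VS = fullv),
      (forall a b, a \in Phi -> b \in Phi -> refl a b \in Phi),
      (forall a b, a \in Phi -> b \in Phi ->
         exists z : int, (2 * dot b a) / dot a a = z%:~R) &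
      (forall a (c : R), a \in Phi -> c *: a \in Phi -> c = 1 \/ c = -1)].

Definition irreducible_rs (Phi : seq vec) : Prop :=
  forall P : pred vec,
    (forall a b, a \in Phi -> b \in Phi -> P a -> ~~ P b -> dot a b = 0) ->
    (forall a, a \in Phi -> P a) \/ (forall a, a \in Phi -> ~~ P a).

Definition base_mx (alpha : 'I_n -> vec) : 'M[R]_n := \matrix_(i < n) alpha i.

Definition is_base (Phi : seq vec) (alpha : 'I_n -> vec) : Prop :=
  [/\ (forall i, alpha i \in Phi),
      row_free (base_mx alpha) &
      (forall b, b \in Phi -> exists k : 'I_n -> int,
          b = \sum_(i < n) (k i)%:~R *: alpha i /\
          ((forall i, 0 <= k i) \/ (forall i, k i <= 0)))].

(* c_i(x): coefficient of alpha_i in x *)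
Definition coef (alpha : 'I_n -> vec) (x : vec) (i : 'I_n) : R :=
  (x *m invmx (base_mx alpha)) 0 i.

Definition dominant_integral (alpha : 'I_n -> vec) (lam : vec) : Prop :=
  forall i, exists k : nat, (2 * dot lam (alpha i)) / dot (alpha i) (alpha i) = k%:R.

(* W lambda: images of lambda under products of reflections s_a, a in Phi
   (W is generated by these reflections) *)
Definition weyl_orbit (Phi : seq vec) (lam x : vec) : Prop :=
  exists s : seq vec, all (mem Phi) s /\ x = foldr refl lam s.

Definition conv (S : vec -> Prop) (x : vec) : Prop :=
  exists (k : nat) (p : 'I_k -> vec) (w : 'I_k -> R),
    [/\ (forall j, S (p j)), (forall j, 0 <= w j),
        \sum_(j < k) w j = 1 & x = \sum_(j < k) w j *: p j].

Definition weight_polytope (Phi : seq vec) (lam : vec) : vec -> Prop :=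
  conv (weyl_orbit Phi lam).

Definition face (Phi : seq vec) (alpha : 'I_n -> vec) (lam : vec)
  (I : {set 'I_n}) (x : vec) : Prop :=
  weight_polytope Phi lam x /\ (forall i, i \in I -> coef alpha x i = coef alpha lam i).

(* extended Dynkin diagram: vertex None = {-lambda}, Some i = alpha_i *)
Definition ext_adj (alpha : 'I_n -> vec) (lam : vec) : rel (option 'I_n) :=
  fun u v => match u, v with
  | None, None => false
  | None, Some i | Some i, None => 0 < dot lam (alpha i)
  | Some i, Some j => (i != j) && (dot (alpha i) (alpha j) != 0)
  end.

Definition in_sub (I : {set 'I_n}) (u : option 'I_n) : bool :=
  if u is Some j then j \notin I else true.

Definition ext_adj_sub alpha lam (I : {set 'I_n}) : rel (option 'I_n) :=
  fun u v => [&& ext_adj alpha lam u v, in_sub I u & in_sub I v].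

Definition Ibar0 alpha lam (I : {set 'I_n}) : {set 'I_n} :=
  [set j | (j \notin I) && connect (ext_adj_sub alpha lam I) None (Some j)].

End RootData.

(* Main.v *)
Require Import Defs.
From HB Require Import structures.
From mathcomp Require Import all_boot all_order all_algebra.
From mathcomp Require Import reals.
From mathcomp Require Import ring lra.
Set Implicit Arguments. Unset Strict Implicit. Unset Printing Implicit Defensive.
Import Order.TTheory GRing.Theory Num.Theory.
Local Open Scope ring_scope.

Section Basics.
Variables (R : realType) (n : nat).
Local Notation vec := 'rV[R]_n.

Lemma dotC (u v : vec) : dot u v = dot v u.
Proof. by apply: eq_bigr => i _; rewrite mulrC. Qed.

Lemma dotDl (u v w : vec) : dot (u + v) w = dot u w + dot v w.
Proof. by rewrite /dot -big_split; apply: eq_bigr => i _; rewrite mxE mulrDl. Qed.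

Lemma dotZl (c : R) (u w : vec) : dot (c *: u) w = c * dot u w.
Proof. by rewrite /dot mulr_sumr; apply: eq_bigr => i _; rewrite mxE mulrA. Qed.

Lemma dotNl (u w : vec) : dot (- u) w = - dot u w.
Proof. by rewrite -scaleN1r dotZl mulN1r. Qed.

Lemma dotBl (u v w : vec) : dot (u - v) w = dot u w - dot v w.
Proof. by rewrite dotDl dotNl. Qed.

Lemma dot0l (w : vec) : dot 0 w = 0.
Proof. by rewrite /dot big1 // => i _; rewrite mxE mul0r. Qed.

Lemma dotDr (u v w : vec) : dot w (u + v) = dot w u + dot w v.
Proof. by rewrite !(dotC w) dotDl. Qed.
Lemma dotZr (c : R) (u w : vec) : dot w (c *: u) = c * dot w u.
Proof. by rewrite !(dotC w) dotZl. Qed.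
Lemma dotNr (u w : vec) : dot w (- u) = - dot w u.
Proof. by rewrite !(dotC w) dotNl. Qed.
Lemma dotBr (u v w : vec) : dot w (u - v) = dot w u - dot w v.
Proof. by rewrite !(dotC w) dotBl. Qed.

Lemma dot_suml (I : Type) (r : seq I) (F : I -> vec) w :
  dot (\sum_(i <- r) F i) w = \sum_(i <- r) dot (F i) w.
Proof.
elim: r => [|a r IH]; first by rewrite !big_nil dot0l.
by rewrite !big_cons dotDl IH.
Qed.
Lemma dot_sumr (I : Type) (r : seq I) (F : I -> vec) w :
  dot w (\sum_(i <- r) F i) = \sum_(i <- r) dot w (F i).
Proof. by rewrite dotC dot_suml; apply: eq_bigr => i _; rewrite dotC. Qed.

Lemma dotxx_ge0 (u : vec) : 0 <= dot u u.
Proof. by apply: sumr_ge0 => i _; rewrite -expr2 sqr_ge0. Qed.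

Lemma dotxx_eq0 (u : vec) : dot u u = 0 -> u = 0.
Proof.
move=> /eqP; rewrite psumr_eq0 => [/allP H|i _]; last by rewrite -expr2 sqr_ge0.
apply/rowP => i; rewrite mxE.
by have /(_ (mem_index_enum i))/implyP/(_ isT) := H i; rewrite mulf_eq0 orbb => /eqP.
Qed.

Lemma dotxx_gt0 (u : vec) : u != 0 -> 0 < dot u u.
Proof.
move=> nz; rewrite lt_def dotxx_ge0 andbT; apply/eqP => /dotxx_eq0 /eqP.
by rewrite (negbTE nz).
Qed.

Implicit Types (a b u v w x y : vec).
Definition cp (v a : vec) : R := 2 * dot v a / dot a a.

Lemma reflE a v : refl a v = v - cp v a *: a.
Proof. by []. Qed.

Lemma cpDl u v a : cp (u + v) a = cp u a + cp v a.
Proof. by rewrite /cp dotDl mulrDr mulrDl. Qed.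
Lemma cpZl c u a : cp (c *: u) a = c * cp u a.
Proof. by rewrite /cp dotZl !mulrA (mulrC 2 c). Qed.
Lemma cpNl u a : cp (- u) a = - cp u a.
Proof. by rewrite /cp dotNl mulrN mulNr. Qed.
Lemma cpBl u v a : cp (u - v) a = cp u a - cp v a.
Proof. by rewrite cpDl cpNl. Qed.
Lemma cpaa a : dot a a != 0 -> cp a a = 2.
Proof. by move=> h; rewrite /cp mulfK. Qed.

Lemma reflD a u v : refl a (u + v) = refl a u + refl a v.
Proof. by rewrite !reflE cpDl scalerDl opprD addrACA. Qed.
Lemma reflZ a c u : refl a (c *: u) = c *: refl a u.
Proof. by rewrite !reflE cpZl scalerBr scalerA. Qed.
Lemma reflN a u : refl a (- u) = - refl a u.
Proof. by rewrite -!scaleN1r reflZ. Qed.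
Lemma reflB a u v : refl a (u - v) = refl a u - refl a v.
Proof. by rewrite reflD reflN. Qed.
Lemma refl0 a : refl a 0 = 0.
Proof. by rewrite reflE /cp dot0l mulr0 mul0r scale0r subr0. Qed.

Lemma refl_aa a : dot a a != 0 -> refl a a = - a.
Proof. move=> h; rewrite reflE cpaa // scaler_nat mulr2n opprD addrA subrr add0r. done. Qed.

Lemma reflK a v : dot a a != 0 -> refl a (refl a v) = v.
Proof.
move=> h; rewrite reflB reflZ refl_aa // scalerN opprK.
by rewrite reflE addrNK.
Qed.

Lemma refl_dot a u v : dot a a != 0 -> dot (refl a u) (refl a v) = dot u v.
Proof.
move=> h; rewrite !reflE dotBl !dotBr !dotZl !dotZr.
rewrite /cp !(dotC a); by field.
Qed.
Lemma refl_conj a b x : dot b b != 0 ->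
  refl b (refl a x) = refl (refl b a) (refl b x).
Proof.
move=> hb; rewrite [in RHS]reflE /cp !refl_dot // -/(cp x a).
by rewrite (reflE a x) reflB reflZ.
Qed.

Lemma reflNa a v : refl (- a) v = refl a v.
Proof. by rewrite !reflE /cp dotNr !dotNl !dotNr opprK !mulrN mulNr scalerN scaleNr opprK. Qed.

End Basics.

Section RS.
Variables (R : realType) (n : nat) (Phi : seq 'rV[R]_n)
  (alpha : 'I_n -> 'rV[R]_n) (lam : 'rV[R]_n).
Local Notation vec := 'rV[R]_n.
Implicit Types (a b u v w x y : vec).
Hypothesis hrs : root_system Phi.
Hypothesis hb : is_base Phi alpha.
Hypothesis hdom : dominant_integral alpha lam.

Local Notation c := (coef alpha).
Local Notation B := (base_mx alpha).

Lemma unitB : B \in unitmx.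
Proof. by case: hb => _ h _; rewrite -row_free_unit. Qed.

Lemma coefD x y i : c (x + y) i = c x i + c y i.
Proof. by rewrite /coef mulmxDl mxE. Qed.
Lemma coefZ k x i : c (k *: x) i = k * c x i.
Proof. by rewrite /coef -scalemxAl mxE. Qed.
Lemma coefN x i : c (- x) i = - c x i.
Proof. by rewrite /coef mulNmx mxE. Qed.
Lemma coefB x y i : c (x - y) i = c x i - c y i.
Proof. by rewrite coefD coefN. Qed.
Lemma coef0 i : c 0 i = 0.
Proof. by rewrite /coef mul0mx mxE. Qed.
Lemma coef_sum (I : Type) (r : seq I) (F : I -> vec) i :
  c (\sum_(k <- r) F k) i = \sum_(k <- r) c (F k) i.
Proof.
elim: r => [|a r IH]; first by rewrite !big_nil coef0.
by rewrite !big_cons coefD IH.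
Qed.
Lemma coef_alpha j i : c (alpha j) i = (i == j)%:R.
Proof.
rewrite /coef -(rowK alpha j) -/(base_mx alpha) -row_mul mulmxV ?unitB //.
by rewrite !mxE eq_sym.
Qed.
Lemma recon x : x = \sum_i c x i *: alpha i.
Proof.
rewrite -[x in LHS]mulmx1 -(mulVmx unitB) mulmxA mulmx_sum_row.
by apply: eq_bigr => i _; rewrite rowK.
Qed.
Lemma coef_inj x y : (forall i, c x i = c y i) -> x = y.
Proof. by move=> h; rewrite (recon x) (recon y); apply: eq_bigr => i _; rewrite h. Qed.
Lemma coef_lin (k : 'I_n -> R) i : c (\sum_j k j *: alpha j) i = k i.
Proof.
rewrite coef_sum (bigD1 i) //= big1 ?addr0 => [|j /negbTE ji].
  by rewrite coefZ coef_alpha eqxx mulr1.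
by rewrite coefZ coef_alpha eq_sym ji mulr0.
Qed.

Lemma alpha_root j : alpha j \in Phi.
Proof. by case: hb. Qed.
Lemma root_nz b : b \in Phi -> b != 0.
Proof. by case: hrs => h _ _ _ _ hb'; apply: contraNneq h => <-. Qed.
Lemma root_dot b : b \in Phi -> dot b b != 0.
Proof. by move=> /root_nz h; rewrite gt_eqF // dotxx_gt0. Qed.
Lemma refl_root a b : a \in Phi -> b \in Phi -> refl a b \in Phi.
Proof. by case: hrs => _ _ h _ _; apply: h. Qed.
Lemma root_opp b : b \in Phi -> - b \in Phi.
Proof. by move=> h; rewrite -refl_aa ?root_dot // refl_root. Qed.
Lemma alpha_dot j : dot (alpha j) (alpha j) != 0.
Proof. exact/root_dot/alpha_root. Qed.

Definition pos x := [forall i, 0 <= c x i].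
Definition neg x := [forall i, c x i <= 0].

Lemma root_coef b : b \in Phi ->
  (forall i, exists z : int, c b i = z%:~R) /\ (pos b || neg b).
Proof.
case: hb => _ _ h /h [k [-> hk]]; split=> [i|]; first by exists (k i); rewrite coef_lin.
case: hk => hk; [apply/orP; left|apply/orP; right]; apply/forallP => i;
  by rewrite coef_lin ?ler0z ?lerz0 hk.
Qed.

Lemma root_not_posneg b : b \in Phi -> pos b -> neg b -> False.
Proof.
move=> hb' /forallP hp /forallP hn; move: (root_nz hb') => /eqP; apply.
apply: coef_inj => i; rewrite coef0; apply/eqP; rewrite eq_le hp hn. done.
Qed.

Lemma negN x : neg (- x) = pos x.
Proof.
apply/forallP/forallP => h i; move: (h i); by rewrite coefN ?oppr_le0 ?oppr_ge0.
Qed.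
Lemma posN x : pos (- x) = neg x.
Proof. by rewrite -negN opprK. Qed.
Lemma pos_alpha j : pos (alpha j).
Proof. by apply/forallP => i; rewrite coef_alpha ler0n. Qed.

Definition act (s : seq 'I_n) x := foldr (fun j y => refl (alpha j) y) x s.

Lemma act_cons j s x : act (j :: s) x = refl (alpha j) (act s x).
Proof. by []. Qed.
Lemma act_cat s1 s2 x : act (s1 ++ s2) x = act s1 (act s2 x).
Proof. by rewrite /act foldr_cat. Qed.
Lemma actD s x y : act s (x + y) = act s x + act s y.
Proof. by elim: s => //= j s ->; rewrite reflD. Qed.
Lemma actZ s k x : act s (k *: x) = k *: act s x.
Proof. by elim: s => //= j s ->; rewrite reflZ. Qed.
Lemma actN s x : act s (- x) = - act s x.
Proof. by elim: s => //= j s ->; rewrite reflN. Qed.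
Lemma actB s x y : act s (x - y) = act s x - act s y.
Proof. by rewrite actD actN. Qed.
Lemma act_root s b : b \in Phi -> act s b \in Phi.
Proof. by elim: s => //= j s IH hb'; rewrite refl_root ?alpha_root ?IH. Qed.
Lemma act_dot s x y : dot (act s x) (act s y) = dot x y.
Proof. by elim: s => //= j s IH; rewrite refl_dot ?alpha_dot. Qed.
Lemma act_conj s a x : act s (refl a x) = refl (act s a) (act s x).
Proof. by elim: s => //= j s ->; rewrite refl_conj ?alpha_dot. Qed.
Lemma act_rev s x : act s (act (rev s) x) = x.
Proof.
elim: s x => //= j s IH x; rewrite rev_cons -cats1 act_cat /= IH.
by rewrite reflK ?alpha_dot.
Qed.

Lemma simple_perm j b : b \in Phi -> pos b -> b != alpha j ->
  pos (refl (alpha j) b).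
Proof.
move=> hb' hp hne.
have hr := refl_root (alpha_root j) hb'.
have hc i : i != j -> c (refl (alpha j) b) i = c b i.
  by move=> ij; rewrite reflE coefB coefZ coef_alpha (negbTE ij) mulr0 subr0.
case: (boolP [exists i, (i != j) && (0 < c b i)]) => [/existsP [i /andP [ij hi]]|].
  case/orP: (root_coef hr).2 => // /forallP /(_ i); rewrite hc //.
  by rewrite leNgt hi.
rewrite negb_exists => /forallP hall.
have eb : b = c b j *: alpha j.
  apply: coef_inj => i; rewrite coefZ coef_alpha.
  case: (eqVneq i j) => [->|ij]; first by rewrite mulr1.
  move: (hall i); rewrite ij /= mulr0 => hi; apply/eqP; rewrite eq_le leNgt hi.
  by move/forallP: hp => ->.
case: hrs => _ _ _ _ hred.
have := hred (alpha j) (c b j) (alpha_root j); rewrite -eb => /(_ hb') [h1|h1].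
  by move: hne; rewrite eb h1 scale1r eqxx.
by move/forallP: hp => /(_ j); rewrite h1 oppr_ge0 ler10.
Qed.

Lemma root_pos_neg b : b \in Phi -> ~~ neg b -> pos b.
Proof. by move=> /root_coef [_ /orP [] ->]. Qed.

Lemma deletion s j : neg (act s (alpha j)) ->
  exists s', (size s' < size s)%N /\ forall x, act s (refl (alpha j) x) = act s' x.
Proof.
elim: s => [|a s IH] /=.
  by move=> hn; case: (root_not_posneg (alpha_root j) (pos_alpha j) hn).
set bt := act s (alpha j) => hn.
have hbt : bt \in Phi by apply: act_root; apply: alpha_root.
case: (boolP (neg bt)) => hnb.
  case: (IH hnb) => s' [hs hw]; exists (a :: s'); split=> [|x]; first by [].
  by rewrite /= hw.
have hpb := root_pos_neg hbt hnb.
have eba : bt = alpha a.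
  apply/eqP; apply: contraT => hne.
  by case: (root_not_posneg (refl_root (alpha_root a) hbt) (simple_perm hbt hpb hne) hn).
exists s; split=> [//|x]; rewrite act_conj -/bt eba reflK //; exact: alpha_dot.
Qed.

Lemma posD x y : pos x -> pos y -> pos (x + y).
Proof.
move=> /forallP hx /forallP hy; apply/forallP => i; rewrite coefD; exact: addr_ge0.
Qed.
Lemma posZ k x : 0 <= k -> pos x -> pos (k *: x).
Proof. move=> hk /forallP hx; apply/forallP => i; rewrite coefZ; exact: mulr_ge0. Qed.

Lemma dom_ge0 j : 0 <= cp lam (alpha j).
Proof. by case: (hdom j) => k; rewrite /cp => ->; apply: ler0n. Qed.

Lemma act_rcons (s : seq 'I_n) (a : 'I_n) x : act (rcons s a) x = act s (refl (alpha a) x).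
Proof. by rewrite -cats1 act_cat. Qed.

Lemma Kpos s : pos (lam - act s lam).
Proof.
move: (leqnn (size s)); move: {2}(size s) => N; elim: N s => [|N IH] s hs.
  case: s hs => // _; rewrite /= subrr; apply/forallP => i; by rewrite coef0.
case: (boolP [exists j, neg (act s (alpha j))]) => [/existsP [j hj]|].
  case: (deletion hj) => s' [hs' hd].
  have e1 : act s lam = act s' lam - cp lam (alpha j) *: act s' (alpha j).
    rewrite -[in LHS](reflK lam (alpha_dot j)) hd reflE actB actZ. done.
  have e2 : act s' (alpha j) = - act s (alpha j).
    by rewrite -hd refl_aa ?alpha_dot // actN.
  rewrite e1.
  have -> : forall t u : vec, lam - (t - u) = (lam - t) + u by move=> t u; rewrite opprB addrA addrAC.
  apply: posD.
    apply: IH; rewrite -ltnS; exact: leq_trans hs' hs.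
  by apply: posZ; [exact: dom_ge0| rewrite e2 posN].
rewrite negb_exists => /forallP hall.
case/lastP: s hs hall => [|s0 a] hs hall.
  rewrite /= subrr; apply/forallP => i; by rewrite coef0.
have hr : act (rcons s0 a) (alpha a) \in Phi by apply/act_root/alpha_root.
have hp := root_pos_neg hr (hall a).
have hn : neg (act s0 (alpha a)).
  by move: hp; rewrite act_rcons refl_aa ?alpha_dot // actN posN.
case: (deletion hn) => s' [hs' hd].
rewrite act_rcons hd; apply: IH.
move: hs; rewrite size_rcons ltnS => hs; exact: leq_trans (ltnW hs') hs.
Qed.

Lemma cp_int a b : a \in Phi -> b \in Phi -> exists z : int, cp b a = z%:~R.
Proof. by case: hrs => _ _ _ h _; apply: h. Qed.

Lemma dot_recon x y : dot x y = \sum_i c x i * dot (alpha i) y.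
Proof.
rewrite {1}(recon x) dot_suml; apply: eq_bigr => i _; by rewrite dotZl.
Qed.

Definition ht x := \sum_i c x i.

Lemma pos_root_conj b : b \in Phi -> pos b ->
  exists (u : seq 'I_n) (j : 'I_n), b = act u (alpha j).
Proof.
move=> hb' hp.
have hh : 0 <= ht b by apply: sumr_ge0 => i _; move/forallP: hp.
move: (archi_boundP hh); move: (Num.Def.archi_bound _) => N.
elim: N b hb' hp {hh} => [|N IH] b hb' hp hN.
  by move: hN; rewrite ltNge (sumr_ge0 _ (fun i _ => (forallP hp) i)).
case: (boolP [exists j, b == alpha j]) => [/existsP [j /eqP ->]|].
  by exists [::], j.
rewrite negb_exists => /forallP hne.
have [j hj] : exists j, 0 < dot b (alpha j).
  apply/existsP; apply: contraT; rewrite negb_exists => /forallP hall.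
  have := dotxx_gt0 (root_nz hb'); rewrite {2}(recon b) dot_sumr ltNge.
  move/negP => HH; exfalso; apply: HH; apply: sumr_le0 => i _; rewrite dotZr.
  apply: mulr_ge0_le0; first by move/forallP: hp.
  by have := hall i; rewrite -leNgt.
set b' := refl (alpha j) b.
have hb1 : b' \in Phi by apply/refl_root => //; exact: alpha_root.
have hp1 : pos b' by apply: simple_perm.
have [z hz] := cp_int (alpha_root j) hb'.
have hcp : 1 <= cp b (alpha j).
  rewrite hz ler1z -gtz0_ge1 -(ltr0z R) -hz /cp.
  by apply: divr_gt0; [rewrite mulr_gt0 // ltr0n| apply: dotxx_gt0; apply: root_nz; apply: alpha_root].
have hht : ht b' = ht b - cp b (alpha j).
  rewrite /ht /b' reflE.
  under eq_bigr => i _ do rewrite coefB coefZ coef_alpha.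
  rewrite sumrB; congr (_ - _); rewrite (bigD1 j) //= eqxx mulr1 big1 ?addr0 //.
  by move=> i /negbTE ->; rewrite mulr0.
have [u [k hk]] : exists (u : seq 'I_n) (k : 'I_n), b' = act u (alpha k).
  apply: IH => //; rewrite hht; move: hN; rewrite mulrS => hN.
  rewrite ltrBlDr; apply: (lt_le_trans hN); rewrite addrC; exact: lerD.
exists (j :: u), k; by rewrite act_cons -hk /b' reflK ?alpha_dot.
Qed.

Lemma refl_word b : b \in Phi -> exists t : seq 'I_n, forall x, refl b x = act t x.
Proof.
move=> hb'.
have H : forall b, b \in Phi -> pos b -> exists t : seq 'I_n, forall x, refl b x = act t x.
  move=> b0 hb0 hp; case: (pos_root_conj hb0 hp) => u [j ->].
  exists (u ++ j :: rev u) => x.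
  by rewrite -{1}(act_rev u x) -act_conj act_cat act_cons.
case: (boolP (neg b)) => hn; last exact: H _ hb' (root_pos_neg hb' hn).
case: (H (- b)); [exact: root_opp| by rewrite posN|].
by move=> t ht; exists t => x; rewrite -ht reflNa.
Qed.

Lemma orbit_word x : weyl_orbit Phi lam x -> exists s : seq 'I_n, x = act s lam.
Proof.
case=> s [hs ->]; elim: s hs => [|b s IH] /=; first by exists [::].
case/andP => hb' /IH [t ->]; case: (refl_word hb') => t' ht.
by exists (t' ++ t); rewrite ht act_cat.
Qed.

Lemma word_orbit s : weyl_orbit Phi lam (act s lam).
Proof.
exists (map alpha s); split.
  by apply/allP => b /mapP [j _ ->]; apply: alpha_root.
by elim: s => //= j s ->.
Qed.

Lemma cp_lam_int s j : exists z : int, cp (act s lam) (alpha j) = z%:~R.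
Proof.
elim: s j => [|a s IH] j /=.
  by case: (hdom j) => k hk; exists (k%:Z); rewrite /cp hk.
rewrite reflE cpBl cpZl.
case: (IH j) => z1 ->; case: (IH a) => z2 ->.
case: (cp_int (alpha_root j) (alpha_root a)) => z3 ->.
by exists (z1 - z2 * z3); rewrite intrB intrM.
Qed.

Lemma dot_lam_ge0 j : 0 <= dot lam (alpha j).
Proof.
have := dom_ge0 j; rewrite /cp pmulr_lge0 ?invr_gt0 ?dotxx_gt0 ?root_nz ?alpha_root //.
by rewrite pmulr_rge0 ?ltr0n.
Qed.

Lemma simple_dot_le0 i j : i != j -> dot (alpha i) (alpha j) <= 0.
Proof.
move=> ij; rewrite leNgt; apply/negP => hd.
have hr := refl_root (alpha_root j) (alpha_root i).
case/orP: (root_coef hr).2 => /forallP h.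
  have := h j; rewrite reflE coefB coefZ !coef_alpha eqxx eq_sym (negbTE ij) mulr1 sub0r oppr_ge0.
  rewrite leNgt /cp => /negP; apply; apply: divr_gt0; first by rewrite mulr_gt0 ?ltr0n // dotC.
  by apply: dotxx_gt0; apply: root_nz; apply: alpha_root.
have := h i; rewrite reflE coefB coefZ !coef_alpha eqxx (negbTE ij) mulr0 subr0.
by rewrite ler10.
Qed.

Section Core.
Variable I : {set 'I_n}.
Local Notation K := (Ibar0 alpha lam I).
Local Notation E := (ext_adj_sub alpha lam I).
Definition Lset i := (i \notin I) && (i \notin K).

Lemma inK j : (j \in K) = (j \notin I) && connect E None (Some j).
Proof. by rewrite inE. Qed.

Lemma L_lam j : Lset j -> dot lam (alpha j) = 0.
Proof.
case/andP => hI hK; apply/eqP; rewrite eq_le dot_lam_ge0 andbT leNgt.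
apply: contra hK => hd; rewrite inK hI /=; apply: connect1.
by rewrite /ext_adj_sub /= hd hI.
Qed.

Lemma L_K i j : i \in K -> Lset j -> dot (alpha i) (alpha j) = 0.
Proof.
move=> hi /andP [hI hK]; apply/eqP; apply: contraNT hK => hd.
case: (eqVneq i j) => [<-|ij] //.
move: hi; rewrite !inK hI => /andP [hiI hc] /=.
apply: (connect_trans hc); apply: connect1.
by rewrite /ext_adj_sub /= hd hiI hI ij.
Qed.

Definition rL p i := if Lset i then c lam i - c p i else 0.
Definition vL p := \sum_i rL p i *: alpha i.

Lemma dot_L p j : (forall i, i \in I -> c p i = c lam i) -> Lset j ->
  dot p (alpha j) = - dot (vL p) (alpha j).
Proof.
move=> hp hj.
have ep : p = lam - \sum_i (c lam i - c p i) *: alpha i.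
  apply: coef_inj => i; by rewrite coefB coef_lin opprB addrC subrK.
rewrite {1}ep dotBl L_lam // sub0r dot_suml /vL dot_suml; congr (- _).
apply: eq_bigr => i _; rewrite !dotZl /rL.
case: (boolP (Lset i)) => // hL.
case: (boolP (i \in I)) => hI.
  by rewrite hp // subrr !mul0r.
have hK : i \in K by move: hL; rewrite /Lset hI /= negbK.
by rewrite (L_K hK hj) !mulr0.
Qed.

Lemma sum_L p : (forall i, i \in I -> c p i = c lam i) ->
  \sum_j rL p j * dot p (alpha j) = - dot (vL p) (vL p).
Proof.
move=> hp.
have -> : dot (vL p) (vL p) = \sum_j rL p j * dot (vL p) (alpha j).
  by rewrite {2}/vL dot_sumr; apply: eq_bigr => j _; rewrite dotZr.
rewrite -sumrN; apply: eq_bigr => j _.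
rewrite /rL; case: (boolP (Lset j)) => hj; last by rewrite !mul0r oppr0.
by rewrite dot_L // mulrN.
Qed.


Lemma rL_ge0 s i : 0 <= rL (act s lam) i.
Proof.
rewrite /rL; case: (Lset i) => //; move/forallP: (Kpos s) => /(_ i).
by rewrite coefB.
Qed.

Lemma core_word s : (forall i, i \in I -> c (act s lam) i = c lam i) ->
  forall l, Lset l -> c (act s lam) l = c lam l.
Proof.
have hS0 : forall s, 0 <= \sum_i rL (act s lam) i.
  by move=> s0; apply: sumr_ge0 => i _; apply: rL_ge0.
move: (archi_boundP (hS0 s)); move: (Num.Def.archi_bound _) => N.
elim: N s => [|N IH] s hN hI.
  by move: hN; rewrite ltNge hS0.
set p := act s lam.
case: (boolP [forall l, Lset l ==> (c p l == c lam l)]) => [/forallP H l hl|].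
  by apply/eqP; move/implyP: (H l); apply.
rewrite negb_forall => /existsP [l]; rewrite negb_imply => /andP [hl hne].
have hv : vL p != 0.
  apply/eqP => h; move: (coef_lin (rL p) l); rewrite -/(vL p) h coef0 /rL hl.
  by move/eqP; rewrite eq_sym subr_eq0 eq_sym (negbTE hne).
have hsum := sum_L hI.
have [j hj] : exists j, rL p j * dot p (alpha j) < 0.
  apply/existsP; apply: contraT; rewrite negb_exists => /forallP H.
  have : 0 <= \sum_j rL p j * dot p (alpha j).
    by apply: sumr_ge0 => j _; have := H j; rewrite -leNgt.
  by rewrite hsum oppr_ge0 leNgt dotxx_gt0.
have hrj := rL_ge0 s j.
have hLj : Lset j.
  apply: contraLR hj => hn; by rewrite /rL (negbTE hn) mul0r ltxx.
have hdj : dot p (alpha j) < 0.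
  rewrite ltNge; apply: contraL hj => hd; rewrite -leNgt; exact: mulr_ge0.
have hda := dotxx_gt0 (root_nz (alpha_root j)).
have hk : cp p (alpha j) <= -1.
  case: (cp_lam_int s j) => z hz; rewrite -/p in hz; rewrite hz.
  have : cp p (alpha j) < 0.
    by rewrite /cp pmulr_llt0 ?invr_gt0 // pmulr_rlt0 ?ltr0n.
  rewrite hz ltrz0 -lezD1 -(lerz0 R) intrD => h1.
  move: h1; lra.
set k := cp p (alpha j).
set p' := act (j :: s) lam.
have ep' : p' = refl (alpha j) p by [].
have hjI : j \notin I by case/andP: hLj.
have hc' : forall i, c p' i = c p i - k * (i == j)%:R.
  by move=> i; rewrite ep' reflE coefB coefZ coef_alpha.
have hI' : forall i, i \in I -> c p' i = c lam i.
  move=> i hi; rewrite hc'; have -> : (i == j) = false.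
    by apply/negbTE; apply: contraNneq hjI => <-.
  by rewrite mulr0 subr0; apply: hI.
have hS' : \sum_i rL p' i = \sum_i rL p i + k.
  rewrite [LHS](bigD1 j) // [in RHS](bigD1 j) //= -addrA [_ + k]addrC addrA.
  congr (_ + _); first by rewrite /rL hLj hc' eqxx mulr1 opprB addrCA addrC.
  apply: eq_bigr => i hij; rewrite /rL hc' (negbTE hij) mulr0 subr0 //.
have hlt : \sum_i rL (act (j :: s) lam) i < N%:R.
  rewrite -/p' hS'; move: hN; rewrite mulrS => hN.
  move: hk hN; rewrite -/k; lra.
have H' := IH (j :: s) hlt hI'.
have hv0 : vL p' = 0.
  rewrite /vL big1 // => i _; rewrite /rL.
  case: (boolP (Lset i)) => hi; last by rewrite scale0r.
  by rewrite H' // subrr scale0r.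
have hd' : dot p' (alpha j) = 0 by rewrite (dot_L hI' hLj) hv0 dot0l oppr0.
have epp : p = p'.
  rewrite -[p](reflK _ (alpha_dot j)) -ep' reflE /cp hd' mulr0 mul0r scale0r subr0 //.
by move: hdj; rewrite epp hd' ltxx.
Qed.

Lemma orbit_le p i : weyl_orbit Phi lam p -> c p i <= c lam i.
Proof.
case/orbit_word => s ->; move/forallP: (Kpos s) => /(_ i).
by rewrite coefB subr_ge0.
Qed.

Lemma core_face x : face Phi alpha lam I x ->
  forall l, Lset l -> c x l = c lam l.
Proof.
case=> [[k [p [w [hp hw hw1 ->]]]] hI] l hl.
have hcs : forall y i, c (\sum_(j < k) w j *: p j) i = \sum_(j < k) w j * c (p j) i.
  by move=> y i; rewrite coef_sum; apply: eq_bigr => j _; rewrite coefZ.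
have hzero : forall i, i \in I -> forall j, w j * (c lam i - c (p j) i) = 0.
  move=> i hi j; apply: (@psumr_eq0P _ _ predT (fun j => w j * (c lam i - c (p j) i))) => // [j' _|].
    by apply: mulr_ge0 => //; rewrite subr_ge0; apply: orbit_le.
  have := hI i hi; rewrite (hcs x i) => h.
  under eq_bigr => j0 _ do rewrite mulrBr.
  by rewrite sumrB h -mulr_suml hw1 mul1r subrr.
rewrite (hcs x l) -[c lam l]mul1r -hw1 mulr_suml; apply: eq_bigr => j _.
case: (eqVneq (w j) 0) => [->|wj]; first by rewrite !mul0r.
case/orbit_word: (hp j) => s es; rewrite es; congr (_ * _).
apply: core_word => // i hi; move/eqP: (hzero i hi j); rewrite mulf_eq0 (negbTE wj) /=.
by rewrite subr_eq0 es => /eqP.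
Qed.

Definition goodw (j : 'I_n) := exists s : seq 'I_n,
  (forall i, i \notin K -> c (act s lam) i = c lam i) /\ c (act s lam) j < c lam j.

Definition Qv (v : option 'I_n) :=
  connect E None v /\ (if v is Some j then goodw j else True).

Lemma dot_expand s j' : dot (act s lam) (alpha j') =
  dot lam (alpha j') + \sum_i (- ((c lam i - c (act s lam) i) * dot (alpha i) (alpha j'))).
Proof.
set p := act s lam.
have ep : p = lam - \sum_i (c lam i - c p i) *: alpha i.
  apply: coef_inj => i; by rewrite coefB coef_lin opprB addrC subrK.
rewrite {1}ep dotBl dot_suml sumrN; congr (_ - _); apply: eq_bigr => i _.
by rewrite dotZl.
Qed.

Lemma Qv_step (u v : option 'I_n) : Qv u -> E u v -> Qv v.
Proof.
case=> hcu hu he; split; first exact: connect_trans hcu (connect1 he).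
case: v he => [j'|] he //.
have hj'I : j' \notin I by move: he; rewrite /ext_adj_sub /= => /and3P [].
have hj'K : j' \in K by rewrite inK hj'I; exact: connect_trans hcu (connect1 he).
have [s0 [h0 hlt0]] : exists s0 : seq 'I_n,
   (forall i, i \notin K -> c (act s0 lam) i = c lam i) /\
   (0 < dot lam (alpha j') + \sum_i (- ((c lam i - c (act s0 lam) i) * dot (alpha i) (alpha j')))
   \/ c (act s0 lam) j' < c lam j').
  case: u hcu hu he => [j|] hcu hu he.
    case: hu => s0 [h0 hj]; exists s0; split => //.
    case: (boolP (c (act s0 lam) j' < c lam j')) => hl; [by right|left].
    have hr : forall i, 0 <= c lam i - c (act s0 lam) i.
      by move=> i; move/forallP: (Kpos s0) => /(_ i); rewrite coefB.
    have hjj : j != j' by move: he; rewrite /ext_adj_sub /= => /and3P [/andP []].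
    have hd : dot (alpha j) (alpha j') < 0.
      move: he; rewrite /ext_adj_sub /= => /and3P [/andP [_ hne] _ _].
      by rewrite lt_def eq_sym hne simple_dot_le0.
    apply: ltr_wpDl; first exact: dot_lam_ge0.
    rewrite (bigD1 j) //=; apply: ltr_wpDr.
      apply: sumr_ge0 => i _; rewrite oppr_ge0.
      case: (eqVneq i j') => [->|ij].
        have : c (act s0 lam) j' = c lam j'.
          by apply/eqP; rewrite eq_le [c lam _ <= _]leNgt hl andbT; move: (hr j'); rewrite subr_ge0.
        by move=> ->; rewrite subrr mul0r.
      by apply: mulr_ge0_le0 => //; apply: simple_dot_le0.
    by rewrite oppr_gt0 pmulr_rlt0 // subr_gt0.
  exists [::]; split => //; left => /=.
  rewrite big1 ?addr0; last by move=> i _; rewrite subrr mul0r oppr0.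
  by move: he; rewrite /ext_adj_sub /= => /andP [].
exists (if c (act s0 lam) j' < c lam j' then s0 else j' :: s0).
case: ifP hlt0 => [hl _|hl [hpos|] //]; first by split.
have hc' : forall i, c (act (j' :: s0) lam) i =
    c (act s0 lam) i - cp (act s0 lam) (alpha j') * (i == j')%:R.
  by move=> i; rewrite act_cons reflE coefB coefZ coef_alpha.
split.
  move=> i hiK; rewrite hc'; have -> : (i == j') = false.
    by apply/negbTE; apply: contraNneq hiK => ->.
  by rewrite mulr0 subr0 h0.
rewrite hc' eqxx mulr1.
have : c (act s0 lam) j' <= c lam j'.
  by move/forallP: (Kpos s0) => /(_ j'); rewrite coefB subr_ge0.
have : 0 < cp (act s0 lam) (alpha j').
  rewrite /cp dot_expand; apply: divr_gt0; first by rewrite mulr_gt0.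
  exact/dotxx_gt0/root_nz/alpha_root.
lra.
Qed.

Lemma K_good j : j \in K -> goodw j.
Proof.
rewrite inK => /andP [_ /connectP [pth hp hl]].
have : Qv (last None pth).
  have : Qv None by split => //; exact: connect0.
  elim: pth None hp {hl} => //= v pth IH u /andP [he hp] hu.
  exact: IH hp (Qv_step hu he).
by rewrite -hl => [[_]].
Qed.
End Core.

Lemma K_notin (I : {set 'I_n}) i : i \in I -> i \notin Ibar0 alpha lam I.
Proof. by move=> hi; rewrite inK hi. Qed.

Lemma act_poly s : weight_polytope Phi lam (act s lam).
Proof.
exists 1%N, (fun _ => act s lam), (fun _ => 1); split => //.
- by move=> _; apply: word_orbit.
- by rewrite big_ord1.
- by rewrite big_ord1 scale1r.
Qed.

Lemma face_iff (I : {set 'I_n}) x : face Phi alpha lam I x <->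
  weight_polytope Phi lam x /\ (forall l, l \notin Ibar0 alpha lam I -> c x l = c lam l).
Proof.
split.
  move=> hf; split; first by case: hf.
  move=> l hl; case: (boolP (l \in I)) => hI; first by case: hf => _; apply.
  by apply: (core_face hf); rewrite /Lset hI hl.
case=> hp h; split => // i hi; apply: h; exact: K_notin.
Qed.

Lemma face_sub (I J : {set 'I_n}) :
  (forall x, face Phi alpha lam I x -> face Phi alpha lam J x) ->
  Ibar0 alpha lam I \subset Ibar0 alpha lam J.
Proof.
move=> H; apply/subsetP => j hj.
case: (K_good hj) => s [h0 hlt].
have hf : face Phi alpha lam I (act s lam).
  by split; [exact: act_poly| move=> i hi; apply: h0; exact: K_notin].
apply: contraT => hjK.
case/face_iff: (H _ hf) => _ /(_ j hjK) he.
by move: hlt; rewrite he ltxx.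
Qed.

End RS.

Unset Implicit Arguments.
Theorem corollary4p4 (R : realType) (n : nat) (Phi : seq 'rV[R]_n)
  (alpha : 'I_n -> 'rV[R]_n) (lam : 'rV[R]_n) :
  (0 < n)%N ->
  root_system Phi -> irreducible_rs Phi -> is_base Phi alpha ->
  dominant_integral alpha lam ->
  forall I J : {set 'I_n},
    (forall x, face Phi alpha lam I x <-> face Phi alpha lam J x) <->
    Ibar0 alpha lam I = Ibar0 alpha lam J.
Proof.
move=> _ hrs _ hb hdom I J; split.
  move=> H; apply/eqP; rewrite eqEsubset.
  by rewrite !(face_sub hrs hb hdom) // => x /H.
move=> eK x; rewrite !(face_iff hrs hb hdom) eK; done.
Qed.
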